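(* Let $G=(X,\Sigma,\longrightarrow,X_0)$ (plant) and $R=(Z,\Sigma,\longrightarrow,Z_0)$ (specification) be automata. If $\mathit{SPR}(G,R)\neq\emptyset$, then $\mathcal{A}(E^{\uparrow}_{(G,R)})\in\mathit{MSPR}(G,R)$.
   Context: An automaton is a 4-tuple $A=(Q,\Sigma,\longrightarrow,Q_0)$ with state set $Q$, finite event set $\Sigma$, ${\longrightarrow}\subseteq Q\times\Sigma\times Q$ and $\emptyset\neq Q_0\subseteq Q$. Write $q\xrightarrow{\sigma}q'$ for $(q,\sigma,q')\in{\longrightarrow}$, $q\xrightarrow{\sigma}$ if some such $q'$ exists; extend to strings. A state is reachable if it is reached from an initial state by some string. Events are partitioned into uncontrollable $\Sigma_{uc}$ and controllable $\Sigma_c$; $\Sigma_r\subseteq\Sigma$ is a fixed set of required events. For a supervisor $S=(Y,\Sigma,\longrightarrow,Y_0)$, $S\|G=(Y\times X,\Sigma,\longrightarrow,Y_0\times X_0)$ with $(y,x)\xrightarrow{\sigma}(y',x')$ iff $y\xrightarrow{\sigma}y'$ and $x\xrightarrow{\sigma}x'$. $S$ is $\Sigma_{uc}$-admissible w.r.t. $G$ if for every reachable $(y,x)$ of $S\|G$ and $\sigma\in\Sigma_{uc}$, $x\xrightarrow{\sigma}$ implies $(y,x)\xrightarrow{\sigma}$. For automata $A_1=(Q_1,\Sigma,\longrightarrow,Q_{01})$, $A_2=(Q_2,\Sigma,\longrightarrow,Q_{02})$, $\Phi\subseteq Q_1\times Q_2$ is a simulation if (initial state) every $q_0\in Q_{01}$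 has $p_0\in Q_{02}$ with $(q_0,p_0)\in\Phi$, and (forward) for all $(q,p)\in\Phi$, $\sigma\in\Sigma$, $q\xrightarrow{\sigma}q'$ there is $p'$ with $p\xrightarrow{\sigma}p'$, $(q',p')\in\Phi$; it is a cc-simulation if moreover ($\Sigma_r$-backward) for all $(q,p)\in\Phi$, $\sigma\in\Sigma_r$, $p\xrightarrow{\sigma}p'$ there is $q'$ with $q\xrightarrow{\sigma}q'$, $(q',p')\in\Phi$. Write $A_1\sqsubseteq A_2$, $A_1\sqsubseteq_{cc}A_2$ if such relations exist. $\mathit{SPR}(G,R)$ is the set of $\Sigma_{uc}$-admissible supervisors $S$ with $S\|G\sqsubseteq_{cc}R$, and $\mathit{MSPR}(G,R)=\{S\in\mathit{SPR}(G,R):\forall S'\in\mathit{SPR}(G,R)\ (S'\|G\sqsubseteq S\|G)\}$. For $W,W'\subseteq X\times Z$, $\sigma\in\Sigma$: $\mathit{match}_{G,R}(W,\sigma,W')$ iff for all $(x,z)\in W$ and $x\xrightarrow{\sigma}x'$ there is $z'$ with $z\xrightarrow{\sigma}z'$ and $(x',z')\in W'$. Define $F_{(G,R)}:\wp(\wp(X\times Z))\to\wp(\wp(X\times Z))$ by: $W\in F_{(G,R)}(E)$ iff $W\in E$ and (1) for every $\sigma\in\Sigma_{uc}$ there is $W'\in E$ with $\mathit{match}_{G,R}(W,\sigma,W')$, and (2) for every $(x,z)\in W$, $\sigma\in\Sigma_r$, $z'$ with $z\xrightarrow{\sigma}z'$ there exist $x'\in X$, $W'\in E$ with $x\xrightarrow{\sigma}x'$,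 $(x',z')\in W'$ and $\mathit{match}_{G,R}(W,\sigma,W')$. $F_{(G,R)}$ is monotone and $E^{\uparrow}_{(G,R)}$ denotes its greatest fixpoint. For $E\subseteq\wp(X\times Z)$ let $E^*=\bigcup_{\widetilde W\in E}\wp(\widetilde W)$ and $\mathrm{Succ}_\sigma(W)=\bigcup_{(x,z)\in W}\{x':x\xrightarrow{\sigma}x'\}\times\{z':z\xrightarrow{\sigma}z'\}$. The automaton $\mathcal{A}(E)=(E^*,\Sigma,\longrightarrow,I_E)$ has $I_E=\{W_0\in E^*:\forall x_0\in X_0\,\exists z_0\in Z_0\,((x_0,z_0)\in W_0)\text{ and }W_0\subseteq X_0\times Z_0\}$ and $W\xrightarrow{\sigma}W'$ iff (i) there exist $(x,z)\in W$, $(x',z')\in W'$ with $x\xrightarrow{\sigma}x'$ and $z\xrightarrow{\sigma}z'$; (ii) $\mathit{match}_{G,R}(W,\sigma,W')$; (iii) $W'\subseteq\mathrm{Succ}_\sigma(W)$. *)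

(* Defs.v *)
From Stdlib Require Import Relations List.

Set Implicit Arguments.

(* Nonemptiness of the initial states is the separate
   predicate [is_automaton] (so that the construction A(E) can be defined
   before knowing that I_E is nonempty). *)
Record automaton (Sigma : Type) := Automaton {
  state : Type;
  trans : state -> Sigma -> state -> Prop;
  init : state -> Prop }.

Arguments state {Sigma} a.
Arguments trans {Sigma} a _ _ _.
Arguments init {Sigma} a _.

Definition is_automaton {Sigma} (A : automaton Sigma) : Prop :=
  exists q0, init A q0.

Definition step {Sigma} (A : automaton Sigma) (q q' : state A) : Prop :=
  exists s, trans A q s q'.

Definition reachable {Sigma} (A : automaton Sigma) (q : state A) : Prop :=
  exists q0, init A q0 /\ clos_refl_trans _ (step A) q0 q.

Definition sync {Sigma} (S G : automaton Sigma) : automaton Sigma :=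
  {| state := (state S * state G)%type;
     trans := fun p s p' => trans S (fst p) s (fst p') /\ trans G (snd p) s (snd p');
     init := fun p => init S (fst p) /\ init G (snd p) |}.

(* Sigma_uc-admissibility, uc = set of uncontrollable events *)
Definition admissible {Sigma} (uc : Sigma -> Prop) (S G : automaton Sigma) : Prop :=
  forall (p : state (sync S G)), reachable (sync S G) p ->
  forall s, uc s -> (exists x', trans G (snd p) s x') ->
  exists p', trans (sync S G) p s p'.

Definition is_simulation {Sigma} (A1 A2 : automaton Sigma)
  (Phi : state A1 -> state A2 -> Prop) : Prop :=
  (forall q0, init A1 q0 -> exists p0, init A2 p0 /\ Phi q0 p0) /\
  (forall q p, Phi q p -> forall s q', trans A1 q s q' ->
     exists p', trans A2 p s p' /\ Phi q' p').

Definition is_cc_simulation {Sigma} (r : Sigma -> Prop) (A1 A2 : automaton Sigma)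
  (Phi : state A1 -> state A2 -> Prop) : Prop :=
  is_simulation A1 A2 Phi /\
  (forall q p, Phi q p -> forall s, r s -> forall p', trans A2 p s p' ->
     exists q', trans A1 q s q' /\ Phi q' p').

Definition simulated {Sigma} (A1 A2 : automaton Sigma) : Prop :=
  exists Phi, is_simulation A1 A2 Phi.

Definition cc_simulated {Sigma} (r : Sigma -> Prop) (A1 A2 : automaton Sigma) : Prop :=
  exists Phi, is_cc_simulation r A1 A2 Phi.

Definition SPR {Sigma} (uc r : Sigma -> Prop) (G R S : automaton Sigma) : Prop :=
  is_automaton S /\ admissible uc S G /\ cc_simulated r (sync S G) R.

Definition MSPR {Sigma} (uc r : Sigma -> Prop) (G R S : automaton Sigma) : Prop :=
  SPR uc r G R S /\
  forall S' : automaton Sigma, SPR uc r G R S' -> simulated (sync S' G) (sync S G).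

Definition pset {Sigma} (G R : automaton Sigma) := (state G * state R -> Prop)%type.

Definition match_GR {Sigma} (G R : automaton Sigma)
  (W : pset G R) (s : Sigma) (W' : pset G R) : Prop :=
  forall x z, W (x, z) -> forall x', trans G x s x' ->
  exists z', trans R z s z' /\ W' (x', z').

Definition F_GR {Sigma} (uc r : Sigma -> Prop) (G R : automaton Sigma)
  (E : pset G R -> Prop) (W : pset G R) : Prop :=
  E W /\
  (forall s, uc s -> exists W', E W' /\ match_GR W s W') /\
  (forall x z, W (x, z) -> forall s, r s -> forall z', trans R z s z' ->
     exists x' W', trans G x s x' /\ E W' /\ W' (x', z') /\ match_GR W s W').

(* greatest fixpoint of the monotone operator F_GR (Knaster–Tarski:
   union of all post-fixpoints) *)
Definition E_up {Sigma} (uc r : Sigma -> Prop) (G R : automaton Sigma)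
  : pset G R -> Prop :=
  fun W => exists E : pset G R -> Prop,
    (forall W', E W' -> F_GR uc r E W') /\ E W.

Definition Estar {Sigma} (G R : automaton Sigma) (E : pset G R -> Prop)
  : pset G R -> Prop :=
  fun W => exists Wt, E Wt /\ (forall p, W p -> Wt p).

Definition Succ {Sigma} (G R : automaton Sigma) (s : Sigma) (W : pset G R)
  : pset G R :=
  fun p => exists x z, W (x, z) /\ trans G x s (fst p) /\ trans R z s (snd p).

Definition A_of {Sigma} (G R : automaton Sigma) (E : pset G R -> Prop)
  : automaton Sigma :=
  {| state := { W : pset G R | Estar E W };
     init := fun W =>
       (forall x0, init G x0 -> exists z0, init R z0 /\ proj1_sig W (x0, z0)) /\
       (forall x z, proj1_sig W (x, z) -> init G x /\ init R z);
     trans := fun W s W' =>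
       (exists x z x' z', proj1_sig W (x, z) /\ proj1_sig W' (x', z') /\
          trans G x s x' /\ trans R z s z') /\
       match_GR (proj1_sig W) s (proj1_sig W') /\
       (forall p, proj1_sig W' p -> Succ s (proj1_sig W) p) |}.
Arguments A_of {Sigma} G R E.
Arguments E_up {Sigma} uc r G R _.

(* Main.v *)
Require Import Defs.
From Stdlib Require Import Relations List Classical.

Set Implicit Arguments.
Section Aux.
Context {Sigma : Type}.

Definition Wy (S G R : automaton Sigma) (Phi : state (sync S G) -> state R -> Prop)
  (y : state S) : pset G R :=
  fun p => reachable (sync S G) (y, fst p) /\ Phi (y, fst p) (snd p).
Arguments Wy S G R Phi y _ : clear implicits.

Lemma reach_step (A : automaton Sigma) p s p' :
  reachable A p -> trans A p s p' -> reachable A p'.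
Proof.
  intros [q0 [Hi Hr]] Ht. exists q0; split; auto.
  eapply rt_trans; eauto. apply rt_step. exists s; auto.
Qed.

Lemma reach_init (A : automaton Sigma) p : init A p -> reachable A p.
Proof. intros H. exists p; split; auto. apply rt_refl. Qed.

Lemma Wy_match (S G R : automaton Sigma) Phi (HPhi : is_simulation (sync S G) R Phi)
  y s y' : trans S y s y' -> match_GR (Wy S G R Phi y) s (Wy S G R Phi y').
Proof.
  intros Hy x1 z1 [Hr Hp] x1' Hx.
  assert (Ht : trans (sync S G) (y, x1) s (y', x1')) by (split; simpl; auto).
  destruct (proj2 HPhi _ _ Hp _ _ Ht) as [z1' [Hz Hp']].
  exists z1'; split; auto. split; simpl; auto. eapply reach_step; eauto.
Qed.

Lemma Wy_in_Eup (uc r : Sigma -> Prop) (S G R : automaton Sigma) Phi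
  (Hadm : admissible uc S G) (HPhi : is_cc_simulation r (sync S G) R Phi) y :
  E_up uc r G R (Wy S G R Phi y).
Proof.
  exists (fun W => exists y, W = Wy S G R Phi y). split; [|eauto].
  intros W' [y1 ->]. split; [eauto|split].
  - intros s Hs.
    destruct (classic (exists y', trans S y1 s y')) as [[y' Hy']|Hn].
    + exists (Wy S G R Phi y'). split; eauto. apply Wy_match; auto. apply HPhi.
    + exists (Wy S G R Phi y1). split; eauto.
      intros x1 z1 [Hr Hp] x1' Hx.
      destruct (Hadm (y1, x1) Hr s Hs (ex_intro _ x1' Hx)) as [p' [Hp1 Hp2]].
      exfalso; apply Hn; eauto.
  - intros x z [Hr Hp] s Hs z' Hz.
    destruct (proj2 HPhi _ _ Hp s Hs z' Hz) as [[y' x'] [[Ht1 Ht2] Hp']].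
    simpl in *.
    exists x', (Wy S G R Phi y'). split; auto. split; eauto. split.
    + split; simpl; auto. eapply reach_step; eauto. split; simpl; eauto.
    + apply Wy_match; auto. apply HPhi.
Qed.

Lemma Eu_post uc r (G R : automaton Sigma) W :
  E_up uc r G R W -> F_GR uc r (E_up uc r G R) W.
Proof.
  intros [E [HE HW]]. destruct (HE W HW) as [_ [H1 H2]].
  split; [exists E; auto|split].
  - intros s Hs. destruct (H1 s Hs) as [W' [HW' Hm]]. exists W'; split; auto.
    exists E; auto.
  - intros x z Hxz s Hs z' Hz. destruct (H2 x z Hxz s Hs z' Hz) as [x' [W' [? [? [? ?]]]]].
    exists x', W'. repeat split; auto. exists E; auto.
Qed.

Lemma restrict_step uc r (G R : automaton Sigma)
  (W : state (A_of G R (E_up uc r G R))) (Wt : pset G R)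
  (Hsub : forall p, proj1_sig W p -> Wt p) s (W'' : pset G R)
  (HW'' : E_up uc r G R W'') (Hm : match_GR Wt s W'') x z x' z'
  (Hxz : proj1_sig W (x, z)) (Hx : trans G x s x') (Hz : trans R z s z')
  (Hx'z' : W'' (x', z')) :
  exists W' : state (A_of G R (E_up uc r G R)),
    trans (A_of G R (E_up uc r G R)) W s W' /\ proj1_sig W' (x', z') /\
    (forall p, proj1_sig W' p -> W'' p).
Proof.
  unshelve eexists (exist _ (fun p => W'' p /\ Succ s (proj1_sig W) p) _).
  { exists W''. split; auto. intros p Hp; apply Hp. }
  simpl. split; [|split].
  - split; [|split].
    + exists x, z, x', z'. repeat split; auto. exists x, z; simpl; auto.
    + intros x1 z1 H1 x1' Hx1. destruct (Hm x1 z1 (Hsub _ H1) x1' Hx1) as [z1' [Hz1 Hw]].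
      exists z1'; split; auto. split; auto. exists x1, z1; simpl; auto.
    + intros p Hp; apply Hp.
  - split; auto. exists x, z; simpl; auto.
  - intros p Hp; apply Hp.
Qed.


Lemma init_state uc r (S G R : automaton Sigma) Phi
  (Hadm : admissible uc S G) (HPhi : is_cc_simulation r (sync S G) R Phi) y0 :
  init S y0 ->
  exists W0 : state (A_of G R (E_up uc r G R)),
    init (A_of G R (E_up uc r G R)) W0 /\
    (forall p, proj1_sig W0 p -> Wy S G R Phi y0 p).
Proof.
  intros Hy0.
  unshelve eexists (exist _ (fun p => Wy S G R Phi y0 p /\ init G (fst p) /\ init R (snd p)) _).
  { exists (Wy S G R Phi y0). split. apply Wy_in_Eup; auto. intros p Hp; apply Hp. }
  simpl. split; [split|].
  - intros x0 Hx0.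
    destruct (proj1 (proj1 HPhi) (y0, x0) (conj Hy0 Hx0)) as [z0 [Hz0 Hp]].
    exists z0. split; auto. split; [|simpl; auto].
    split; simpl; auto. apply reach_init. split; simpl; auto.
  - intros x z H; apply H.
  - intros p Hp; apply Hp.
Qed.

End Aux.
Arguments Wy {Sigma} S G R Phi y _.
Arguments restrict_step {Sigma uc r G R W Wt} Hsub {s W''} HW'' Hm {x z x' z'} Hxz Hx Hz Hx'z'.
Unset Implicit Arguments.

Theorem theorem2 (Sigma : Type) (Sigma_finite : exists l : list Sigma, forall s, List.In s l)
  (uc r : Sigma -> Prop) (G R : automaton Sigma)
  (HG : is_automaton G) (HR : is_automaton R) :
  (exists S : automaton Sigma, SPR uc r G R S) ->
  MSPR uc r G R (A_of G R (E_up uc r G R)).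
Proof.
  intros [S [[y0 Hy0] [Hadm [Phi HPhi]]]].
  set (A := A_of G R (E_up uc r G R)).
  assert (Inv : forall p, reachable (sync A G) p -> exists z, proj1_sig (fst p) (snd p, z)).
  { intros p [q0 [Hq0 Hr]].
    assert (H0 : exists z, proj1_sig (fst q0) (snd q0, z)).
    { destruct Hq0 as [[Hi _] Hx]. destruct (Hi _ Hx) as [z [_ Hz]]; eauto. }
    clear Hq0. induction Hr; auto.
    destruct H as [s [[_ [Hm _]] Hx]]. destruct H0 as [z Hz].
    destruct (Hm _ _ Hz _ Hx) as [z' [_ Hz']]. eauto. }
  split; [split; [|split]|].
  - destruct (init_state Hadm HPhi _ Hy0) as [W0 [HW0 _]]. exists W0; exact HW0.
  - intros [W x] Hp s Hs [x' Hx']. destruct (Inv _ Hp) as [z Hz]. simpl in *.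
    destruct (proj2_sig W) as [Wt [HWt Hsub]].
    destruct (Eu_post HWt) as [_ [H1 _]]. destruct (H1 s Hs) as [W'' [HW'' Hm]].
    destruct (Hm x z (Hsub _ Hz) x' Hx') as [z' [Hzz Hw]].
    destruct (restrict_step Hsub HW'' Hm Hz Hx' Hzz Hw) as [W' [Ht _]].
    exists (W', x'). split; simpl; auto.
  - exists (fun q z => proj1_sig (fst q) (snd q, z)). split; [split|].
    + intros [W0 x0] [[Hi _] Hx0]. simpl in *. destruct (Hi _ Hx0) as [z0 [? ?]]. eauto.
    + intros [W x] z Hq s [W' x'] [[_ [Hm _]] Hx]. simpl in *.
      destruct (Hm _ _ Hq _ Hx) as [z' [? ?]]. eauto.
    + intros [W x] z Hq s Hs z' Hz. simpl in *.
      destruct (proj2_sig W) as [Wt [HWt Hsub]].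
      destruct (Eu_post HWt) as [_ [_ H2]].
      destruct (H2 x z (Hsub _ Hq) s Hs z' Hz) as [x' [W'' [Hx [HW'' [Hw Hm]]]]].
      destruct (restrict_step Hsub HW'' Hm Hq Hx Hz Hw) as [W' [Ht [Hin _]]].
      exists (W', x'). split; [split|]; simpl; auto.
  - intros S' [_ [Hadm' [Phi' HPhi']]].
    exists (fun q a => snd a = snd q /\ reachable (sync S' G) q /\
              (forall p, proj1_sig (fst a) p -> Wy S' G R Phi' (fst q) p) /\
              exists z, Phi' q z /\ proj1_sig (fst a) (snd q, z)).
    split.
    + intros [y1 x0] [Hy1 Hx0]. simpl in *.
      destruct (init_state Hadm' HPhi' _ Hy1) as [W0 [HW0 Hsub]].
      exists (W0, x0). split; [split; simpl; auto|].
      simpl. split; auto. split. apply reach_init; split; auto.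
      split; auto. destruct (proj1 HW0 x0 Hx0) as [z0 [_ Hz0]].
      exists z0. split; auto. apply (Hsub _ Hz0).
    + intros [y x] [W x1] [Heq [Hr [Hsub [z [Hp Hz]]]]] s [y' x'] [Hy Hx].
      simpl in *. subst x1.
      destruct (proj2 (proj1 HPhi') _ _ Hp s (y', x') (conj Hy Hx)) as [z' [Hzz Hp']].
      assert (Hr' : reachable (sync S' G) (y', x')) by (eapply reach_step; eauto; split; eauto).
      assert (HW'' : Wy S' G R Phi' y' (x', z')) by (split; simpl; auto).
      destruct (restrict_step Hsub (Wy_in_Eup Hadm' HPhi' y')
                 (@Wy_match _ _ _ _ _ (proj1 HPhi') y s y' Hy) Hz Hx Hzz HW'') as [W' [Ht [Hin Hs']]].
      exists (W', x'). split; [split; simpl; auto|].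
      simpl. split; [reflexivity|split; [exact Hr'|split; [exact Hs'|exists z'; split; assumption]]].
Qed.
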